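(* Let $(X,d)$ be a bounded metric space, let $S(X)$ be its Samuel compactification with compact topology $\tau$, and define on $S(X)$ the metric $\partial(a,b)=\sup\{|f(a)-f(b)| : f\in\mathrm{Lip}_1(X)\}$. Then every $\tau$-convergent sequence in $S(X)$ is $\partial$-convergent.
   Context: $S(X)$ is the compactification of $X$ associated with the algebra of bounded uniformly continuous real functions on $(X,d)$: it is a compact Hausdorff space containing a dense image of $X$ such that every bounded uniformly continuous $f\colon X\to\mathbb R$ extends uniquely to a continuous function on $S(X)$ (concretely, the closure of the image of $X$ in $\prod_f \overline{f(X)}$ under $x\mapsto (f(x))_f$). $\mathrm{Lip}_1(X)$ is the set of bounded $1$-Lipschitz functions $X\to\mathbb R$, each identified with its continuous extension to $S(X)$. The triple $(S(X),\tau,\partial)$ is a compact topometric space: the $\partial$-topology refines $\tau$ and $\partial$ is $\tau$-lower semicontinuous. *)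

(* Defs.v *)
From HB Require Import structures.
From mathcomp Require Import all_boot all_order all_algebra.
From mathcomp Require Import all_classical all_reals all_analysis.
Set Implicit Arguments. Unset Strict Implicit. Unset Printing Implicit Defensive.
Import Order.TTheory GRing.Theory Num.Theory.
Import numFieldNormedType.Exports.
Local Open Scope classical_set_scope.
Local Open Scope ring_scope.

Section Samuel.
Variables (R : realType) (X : Type) (d : X -> X -> R).

Definition is_metric : Prop :=
  [/\ forall x y, 0 <= d x y,
      forall x y, d x y = 0 <-> x = y,
      forall x y, d x y = d y x &
      forall x y z, d x z <= d x y + d y z].

Definition metric_bounded : Prop := exists M : R, forall x y, d x y <= M.

Definition fun_bounded (f : X -> R) : Prop := exists M : R, forall x, `|f x| <= M.

Definition unif_cont (f : X -> R) : Prop :=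
  forall e : R, 0 < e -> exists2 delta : R, 0 < delta &
    forall x y, d x y < delta -> `|f x - f y| < e.

Definition is_buc (f : X -> R) : Prop := fun_bounded f /\ unif_cont f.

Definition BUC := {f : X -> R | is_buc f}.

Definition is_lip1 (f : X -> R) : Prop :=
  fun_bounded f /\ forall x y, `|f x - f y| <= d x y.

Lemma lip1_buc f : is_lip1 f -> is_buc f.
Proof.
move=> [fb fl]; split => // e e0; exists e => // x y dxy.
exact: le_lt_trans (fl x y) dxy.
Qed.

Definition samuel_emb (x : X) : {ptws BUC -> R} := fun f => proj1_sig f x.

(* Points of S(X) are families (a_f)_f, and
   the continuous extension of f to S(X) is the coordinate a |-> a_f. *)
Definition samuel : set {ptws BUC -> R} := closure (range samuel_emb).

Definition lip1_ext (f : X -> R) (hf : is_lip1 f) (a : {ptws BUC -> R}) : R :=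
  a (exist _ f (lip1_buc hf)).

Definition samuel_dist (a b : {ptws BUC -> R}) : R :=
  sup [set r : R | exists f (hf : is_lip1 f), r = `|lip1_ext hf a - lip1_ext hf b| ].

End Samuel.

Arguments samuel {R X} d _.
Arguments samuel_dist {R X} d _ _.
Arguments samuel_emb {R X} d _ _.

(* Main.v *)
Require Import Defs.
From HB Require Import structures.
From mathcomp Require Import all_boot all_order all_algebra.
From mathcomp Require Import all_classical all_reals all_analysis.
From mathcomp Require Import lra.
Import Order.TTheory GRing.Theory Num.Theory.
Import numFieldNormedType.Exports.
Local Open Scope classical_set_scope.
Local Open Scope ring_scope.

Lemma ptws_ev (R : realType) (B : Type) (b : B) :
  continuous (fun z : {ptws B -> R} => z b).
Proof.
move=> f; have /cvg_sup/(_ b)/cvg_image : f --> f by apply: cvg_id.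
move=> h; apply: cvg_trans (h _) => {h}.
  by move=> Q /= [W nbdW <-]; apply: filterS nbdW; exact: preimage_image.
rewrite eqEsubset; split => y //; exists (fun c => if pselect (c = b) is left e then (eq_rect_r (fun _ => R) y e) else f c) => //; by case: pselect.
Qed.

Lemma ptws_near (R : realType) (B : Type) (b : B) (a : {ptws B -> R}) (e : R) :
  0 < e -> \forall z \near a, `|z b - a b| < e.
Proof.
move=> e0.
have h : (fun z : {ptws B -> R} => z b) @ a --> a b := @ptws_ev R B b a.
have := cvgr_dist_lt _ _ h _ e0.
move=> H; have F : Filter (nbhs a) by apply: nbhs_filter.
exact: (filterS (fun z (hz : `|a b - z b| < e) => (eq_ind _ (fun r => r < e) hz _ (distrC _ _))) (H F)).
Qed.

Lemma ptws_near_seq (R : realType) (B : Type) (q a : {ptws B -> R}) (e : R) (s : seq B) :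
  (forall g, List.In g s -> `|a g - q g| < e) ->
  \forall z \near a, forall g, List.In g s -> `|z g - q g| < e.
Proof.
have FF : Filter (nbhs a) by apply: nbhs_filter.
elim: s => [|g s IH] H; first exact: (@nearW _ (nbhs a) _ FF (fun z g (hg : List.In g [::]) => match hg with end)).
have Hg : `|a g - q g| < e by apply: H; left.
have := @ptws_near R B g a (e - `|a g - q g|); rewrite subr_gt0 => /(_ Hg).
have := IH (fun g' h => H g' (or_intror h)).
apply: (filterS2 (F := nbhs a)) => z h1 h2 g' [<-|hin]; last exact: h1.
have := ler_distD (a g) (z g) (q g); move: h2 Hg; lra.
Qed.

Fixpoint Lseq (A : Type) (st : seq A -> A) (k : nat) : seq A :=
  match k with 0 => [::] | k.+1 => rcons (Lseq A st k) (st (Lseq A st k)) end.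
Arguments Lseq {A} st k.

Lemma size_Lseq A st k : size (@Lseq A st k) = k.
Proof. by elim: k => //= k IH; rewrite size_rcons IH. Qed.

Lemma In_Lseq A st j k : (j < k)%N -> List.In (st (@Lseq A st j)) (Lseq st k).
Proof.
elim: k => // k IH; rewrite ltnS leq_eqVlt => /orP[/eqP ->|hj] /=;
  rewrite -cats1; apply/List.in_app_iff; [right; left | left; exact: IH] => //.
Qed.

Lemma sep_arith (R : realType) (e a b u v D : R) :
  `|u - a| < e -> `|v - b| < e -> 3 * e < `|a - b| -> `|u - v| <= D -> e < D.
Proof.
move=> h1 h2 h3 h4.
have := ler_distD u a b; have := ler_distD v u b; rewrite (distrC a u); lra.
Qed.

Lemma key (R : realType) (X : Type) (d : X -> X -> R) (hd : is_metric d)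
  (hb : metric_bounded d)
  (p : nat -> {ptws BUC d -> R}) (q : {ptws BUC d -> R})
  (hp : forall n, samuel d (p n)) (pq : p @ \oo --> q) (eps : R) (eps0 : 0 < eps) :
  ~ (forall N, exists n, (N <= n)%N /\ exists g : BUC d,
       (forall x y, `|proj1_sig g x - proj1_sig g y| <= d x y) /\
       3 * eps < `|p n g - q g|).
Proof.
move=> H.
case: hd => d0 dxx dC dT.
have pce : forall (e : R) (g : BUC d), 0 < e -> \forall n \near \oo, `|p n g - q g| < e.
  move=> e g e0; have h : (fun n => p n g) @ \oo --> q g.
    exact: (continuous_cvg _ (@ptws_ev R (BUC d) g q) pq).
  by apply: filterS (cvgr_dist_lt _ _ h _ e0) => n; rewrite distrC.
have pc g := pce eps g eps0.
have step : forall s : seq (BUC d), exists nf : nat * BUC d,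
   [/\ (size s <= nf.1)%N,
       (forall x y, `|proj1_sig nf.2 x - proj1_sig nf.2 y| <= d x y),
       3 * eps < `|p nf.1 nf.2 - q nf.2| &
       (forall g, List.In g s -> `|p nf.1 g - q g| < eps)].
  move=> s.
  have : \forall n \near \oo, forall g, List.In g s -> `|p n g - q g| < eps.
    elim: s => [|g s IH]; first by apply: nearW => n g [].
    by apply: filterS2 (pc g) IH => n h1 h2 g' [<-|]; [exact: h1| exact: h2].
  case=> N _ HN.
  have [n [Hn [g [Hg1 Hg2]]]] := H (maxn N (size s)).
  exists (n, g); split => //=.
    exact: leq_trans (leq_maxr _ _) Hn.
  apply: HN => /=; exact: leq_trans (leq_maxl _ _) Hn.
pose st s := projT1 (cid (step s)).
have stP s : _ := projT2 (cid (step s)).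
pose L := Lseq (fun s => (st s).2).
pose nk k := (st (L k)).1.
pose fk k := (st (L k)).2.
have fkP : forall k, [/\ (k <= nk k)%N,
    (forall x y, `|sval (fk k) x - sval (fk k) y| <= d x y),
    3 * eps < `|p (nk k) (fk k) - q (fk k)| &
    forall g, List.In g (L k) -> `|p (nk k) g - q g| < eps].
  move=> k; have [h1 h2 h3 h4] := stP (L k); split => //.
  by apply: leq_trans h1; rewrite size_Lseq.
pose W k x := `|sval (fk k) x - p (nk k) (fk k)| < eps /\
   forall g, List.In g (L k) -> `|sval g x - q g| < eps.
have sep : forall j k x y, (j < k)%N -> W j x -> W k y -> eps < d x y.
  move=> j k x y jk [Wx _] [_ Wy].
  have Hin : List.In (fk j) (L k) := @In_Lseq _ (fun s => (st s).2) j k jk.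
  have [_ Hl Hb _] := fkP j.
  exact: sep_arith Wx (Wy _ Hin) Hb (Hl x y).
have density : forall k (G : BUC d) δ, 0 < δ ->
    exists x, W k x /\ `|sval G x - p (nk k) G| < δ.
  move=> k G δ δ0; have [_ _ _ Hc] := fkP k.
  have FF : Filter (nbhs (p (nk k))) by apply: nbhs_filter.
  have N1 := @ptws_near R (BUC d) (fk k) (p (nk k)) eps eps0.
  have N2 := @ptws_near_seq R (BUC d) q (p (nk k)) eps (L k) Hc.
  have N3 := @ptws_near R (BUC d) G (p (nk k)) δ δ0.
  have N := filterI N1 (filterI N2 N3).
  have := hp (nk k). rewrite /samuel /closure /=. move=> /(_ _ (N FF FF)).
  case=> z [[x _ <-] [h1 [h2 h3]]].
  by exists x.
pose B1 := [set x | exists k, odd k /\ W k x].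
have [x1 [Wx1 _]] := density 1%N (fk 0%N) 1 ltr01.
have B1x1 : B1 x1 by exists 1%N.
pose G0 x := inf [set d x y | y in B1].
have hlb x : has_lbound [set d x y | y in B1] by exists 0 => r [y _ <-].
have ne x : [set d x y | y in B1] !=set0 by exists (d x x1), x1.
have G0le x y : B1 y -> G0 x <= d x y.
  by move=> hy; apply: (ge_inf (hlb x)); exists y.
have G0ge0 x : 0 <= G0 x by apply: lb_le_inf (ne x) _ => r [y _ <-].
have G0lip x y : G0 x <= d x y + G0 y.
  have : G0 x - d x y <= G0 y.
    apply: lb_le_inf (ne y) _ => r [z hz <-].
    have := G0le x z hz; have := dT x y z; lra.
  lra.
have G0norm x y : `|G0 x - G0 y| <= d x y.
  rewrite ler_norml; have := G0lip x y; have := G0lip y x; have := dC x y.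
  move=> *; apply/andP; split; lra.
have [M hM] := hb.
have Gbuc : is_buc d G0.
  split.
    exists M => x; rewrite ger0_norm //; exact: le_trans (G0le x x1 B1x1) (hM _ _).
  by move=> e e0; exists e => // x y hxy; apply: le_lt_trans (G0norm x y) hxy.
pose Gb : BUC d := exist _ G0 Gbuc.
have e4 : 0 < eps / 4 by rewrite divr_gt0.
have odd_val : forall k, odd k -> `|p (nk k) Gb| < eps / 4.
  move=> k ok; have [x [Wx hx]] := density k Gb (eps / 4) e4.
  have h0 : G0 x = 0.
    apply/eqP; rewrite eq_le G0ge0 andbT -(proj2 (dxx x x) erefl).
    by apply: G0le; exists k.
  by move: hx => /=; rewrite h0 sub0r normrN.
have even_val : forall k, ~~ odd k -> 3 * eps / 4 < p (nk k) Gb.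
  move=> k ek; have [x [Wx hx]] := density k Gb (eps / 4) e4.
  have hge : eps <= G0 x.
    apply: lb_le_inf (ne x) _ => r [y [j [oj Wy]] <-].
    case: (ltngtP j k) => hjk.
    - by rewrite dC; apply/ltW; exact: sep j k y x hjk Wy Wx.
    - by apply/ltW; exact: sep k j x y hjk Wx Wy.
    - by move: ek; rewrite -hjk oj.
  move: hx => /=; rewrite ltr_norml => /andP[? ?]; lra.
have [N _ HN] := pce (eps / 4) Gb e4.
have [hk1 _ _ _] := fkP N.*2.
have [hk2 _ _ _] := fkP N.*2.+1.
have h1 := HN (nk N.*2) (leq_trans (leq_trans (leq_addr N N) (eq_leq (addnn N))) hk1).
have h2 := HN (nk N.*2.+1) (leq_trans (leq_trans (leq_addr N N) (eq_leq (addnn N))) (ltnW hk2)).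
have o1 : odd N.*2.+1 by rewrite /= odd_double.
have h3 := odd_val N.*2.+1 o1.
have o2 : ~~ odd N.*2 by rewrite odd_double.
have h4 := even_val N.*2 o2.
move: h1 h2 h3; rewrite !ltr_norml => /andP[? ?] /andP[? ?] /andP[? ?]; lra.
Qed.

Theorem mainTheorem20 (R : realType) (X : Type) (d : X -> X -> R)
  (hd : is_metric d) (hb : metric_bounded d)
  (p : nat -> {ptws BUC d -> R}) (q : {ptws BUC d -> R}) :
  (forall n, samuel d (p n)) -> samuel d q ->
  p @ \oo --> q ->
  exists2 r : {ptws BUC d -> R}, samuel d r &
    (fun n => samuel_dist d (p n) r) @ \oo --> (0 : R).
Proof.
move=> hp hq pq; exists q => //.
apply/cvgrPdist_lt => e e0.
pose eps := e / 4.
have eps0 : 0 < eps by rewrite divr_gt0.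
have claim : \forall n \near \oo, forall g : BUC d,
    (forall x y, `|sval g x - sval g y| <= d x y) -> `|p n g - q g| <= 3 * eps.
  case: (pselect (exists N, forall n, (N <= n)%N -> forall g : BUC d,
    (forall x y, `|sval g x - sval g y| <= d x y) -> `|p n g - q g| <= 3 * eps))
    => [[N HN]|HN]; first by exists N.
  exfalso; apply: (@key R X d hd hb p q hp pq eps eps0) => N.
  have := (forallNP _).2 HN N.
  move/existsNP => [n /not_implyP [Nn /existsNP [g /not_implyP [Hg Hn]]]].
  exists n; split => //; exists g; split => //; rewrite ltNge; exact/negP.
apply: filterS claim => n C.
rewrite /samuel_dist.
set S := [set r : R | _].
have hd0 : forall x y, 0 <= d x y by case: hd.
have lip0 : is_lip1 d (fun=> 0 : R).
  split; first by exists 0 => x; rewrite normr0.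
  by move=> x y; rewrite subrr normr0.
have Sr0 : S `|lip1_ext lip0 (p n) - lip1_ext lip0 q| by exists (fun=> 0), lip0.
have ub : ubound S (3 * eps).
  by move=> r [f [hf ->]]; apply: C; case: hf.
have hs : sup S <= 3 * eps by apply: ge_sup => //; eexists; exact: Sr0.
have h0 : `|lip1_ext lip0 (p n) - lip1_ext lip0 q| <= sup S.
  by apply: ub_le_sup => //; exists (3 * eps).
have := normr_ge0 (lip1_ext lip0 (p n) - lip1_ext lip0 q).
move: h0 hs; rewrite sub0r normrN /eps => h0 hs h1.
rewrite ger0_norm; lra.
Qed.
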